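(* Let $(H,B_1,B_2)$ be a Rota-Baxter system of Hopf algebras with cocycle $\sigma$. If $\sigma$ is surjective, then $(H,B_2)$ and $(H,B_1\circ S)$ are Rota-Baxter Hopf algebras.
   Context: $\mathbb{F}$ is a field of characteristic $0$; Sweedler notation $\Delta(a)=a_1\otimes a_2$. A Rota-Baxter system of Hopf algebras is a triple $(H,B_1,B_2)$ where $(H,\cdot,1,\Delta,\epsilon,S)$ is a cocommutative Hopf algebra and $B_1,B_2:H\to H$ are coalgebra homomorphisms with $B_1(1)=B_2(1)=1$ such that for all $a,b\in H$: $B_1(a)B_1(b)=B_1(B_1(a_1)bS(B_2(a_2)))$ and $B_2(a)B_2(b)=B_2(B_1(a_1)bS(B_2(a_2)))$. Its cocycle is $\sigma(a)=B_1(a_1)S(B_2(a_2))$. A Rota-Baxter Hopf algebra is a pair $(H,B)$ where $H$ is a cocommutative Hopf algebra and $B:H\to H$ is a coalgebra homomorphism with $B(a)B(b)=B(a_1B(a_2)\,b\,S(B(a_3)))$ for all $a,b\in H$. *)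

(* Defs.v *)
From HB Require Import structures.
From mathcomp Require Import all_boot all_order all_algebra.
Set Implicit Arguments. Unset Strict Implicit. Unset Printing Implicit Defensive.
Import GRing.Theory.
Local Open Scope ring_scope.

(* The coproduct Delta(a) in H (x) H is represented by a finite list of pairs
   [(a1_i, a2_i)] standing for \sum_i a1_i (x) a2_i (Sweedler notation).
   Equalities in H (x) H (resp. H (x) H (x) H) are expressed by testing against
   all bilinear (resp. trilinear) forms H x H -> F, which separate the points of
   the tensor product over a field. *)

Section Hopf.
Variables (F : fieldType) (H : algType F).

Definition bilinear_form (phi : H -> H -> F) : Prop :=
  (forall (k : F) (x y z : H), phi (k *: x + y) z = k * phi x z + phi y z) /\
  (forall (k : F) (x y z : H), phi x (k *: y + z) = k * phi x y + phi x z).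

Definition trilinear_form (psi : H -> H -> H -> F) : Prop :=
  (forall (k : F) (x y z w : H), psi (k *: x + y) z w = k * psi x z w + psi y z w) /\
  (forall (k : F) (x y z w : H), psi x (k *: y + z) w = k * psi x y w + psi x z w) /\
  (forall (k : F) (x y z w : H), psi x y (k *: z + w) = k * psi x y z + psi x y w).

Definition sw {V : zmodType} (cop : H -> seq (H * H)) (g : H -> H -> V) (a : H) : V :=
  \sum_(p <- cop a) g p.1 p.2.

Definition lin_map (f : H -> H) : Prop :=
  forall (k : F) (x y : H), f (k *: x + y) = k *: f x + f y.

Definition cocomm_hopf (cop : H -> seq (H * H)) (eps : H -> F) (S : H -> H) : Prop :=
      (forall phi, bilinear_form phi -> forall (k : F) (a b : H),
         sw cop phi (k *: a + b) = k * sw cop phi a + sw cop phi b) /\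
      (* coassociativity: (a_1)_1 (x) (a_1)_2 (x) a_2 = a_1 (x) (a_2)_1 (x) (a_2)_2 *)
      (forall psi, trilinear_form psi -> forall a : H,
         \sum_(p <- cop a) \sum_(q <- cop p.1) psi q.1 q.2 p.2 =
         \sum_(p <- cop a) \sum_(q <- cop p.2) psi p.1 q.1 q.2) /\
      (forall (k : F) (a b : H), eps (k *: a + b) = k * eps a + eps b) /\
      (forall a : H, sw cop (fun x y => eps x *: y) a = a /\
                     sw cop (fun x y => eps y *: x) a = a) /\
      (forall phi, bilinear_form phi -> forall a b : H,
         sw cop phi (a * b) =
         \sum_(p <- cop a) \sum_(q <- cop b) phi (p.1 * q.1) (p.2 * q.2)) /\
      (forall phi, bilinear_form phi -> sw cop phi 1 = phi 1 1) /\
      ((forall a b : H, eps (a * b) = eps a * eps b) /\ eps 1 = 1) /\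
      (lin_map S /\
      (forall a : H, sw cop (fun x y => S x * y) a = eps a *: 1 /\
                     sw cop (fun x y => x * S y) a = eps a *: 1)) /\
      (forall phi, bilinear_form phi -> forall a : H,
         sw cop phi a = sw cop (fun x y => phi y x) a).

Definition coalg_hom (cop : H -> seq (H * H)) (eps : H -> F) (B : H -> H) : Prop :=
  [/\ lin_map B,
      (forall phi, bilinear_form phi -> forall a : H,
         sw cop phi (B a) = sw cop (fun x y => phi (B x) (B y)) a) &
      (forall a : H, eps (B a) = eps a)].

Definition RB_system (cop : H -> seq (H * H)) (eps : H -> F) (S : H -> H)
  (B1 B2 : H -> H) : Prop :=
  [/\ cocomm_hopf cop eps S,
      coalg_hom cop eps B1 /\ coalg_hom cop eps B2,
      B1 1 = 1 /\ B2 1 = 1,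
      (forall a b : H,
         B1 a * B1 b = B1 (sw cop (fun x y => B1 x * b * S (B2 y)) a)) &
      (forall a b : H,
         B2 a * B2 b = B2 (sw cop (fun x y => B1 x * b * S (B2 y)) a))].

Definition RB_cocycle (cop : H -> seq (H * H)) (S : H -> H) (B1 B2 : H -> H)
  (a : H) : H :=
  sw cop (fun x y => B1 x * S (B2 y)) a.

Definition RB_hopf (cop : H -> seq (H * H)) (eps : H -> F) (S : H -> H)
  (B : H -> H) : Prop :=
  [/\ cocomm_hopf cop eps S,
      coalg_hom cop eps B &
      (forall a b : H,
         B a * B b =
         B (\sum_(p <- cop a) \sum_(q <- cop p.2) p.1 * B q.1 * b * S (B q.2)))].

End Hopf.

(* Main.v *)
From HB Require Import structures.
From mathcomp Require Import all_boot all_order all_algebra.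
From mathcomp Require classical_sets boolp.
Require Import Defs.
Set Implicit Arguments. Unset Strict Implicit. Unset Printing Implicit Defensive.
Import GRing.Theory.
Local Open Scope ring_scope.

Section Sep.
Variables (F : fieldType) (H : lmodType F).

Definition linF (l : H -> F) := forall k x y, l (k *: x + y) = k * l x + l y.

Let closedW (W : H -> Prop) := forall k x y, W x -> W y -> W (k *: x + y).

Lemma sep_ex (h : H) : h != 0 -> exists l, linF l /\ l h = 1.
Proof.
move=> h0.
pose P := fun W : H -> Prop => closedW W /\ ~ W h.
have [A [[cA nAh] maxA]] : exists A, P A /\ forall B, classical_sets.proper A B -> ~ P B.
  apply: classical_sets.Zorn_bigcup => Fm FP tot; split.
  - move=> k x y [X FX Xx] [Y FY Yy].
    have [XY|YX] := tot X Y FX FY.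
    + exists Y => //; apply: (proj1 (FP Y FY)) => //; exact: XY.
    + exists X => //; apply: (proj1 (FP X FX)) => //; exact: YX.
  - by move=> [X FX Xh]; exact: (proj2 (FP X FX)).
have A0 : A 0.
  case: (boolp.pselect (exists x, A x)) => [[x Ax]|nA].
    by have := cA (-1) x x Ax Ax; rewrite scaleN1r addNr.
  exfalso; apply: (maxA (fun u => u = 0)).
    split; first by move=> t At; exfalso; apply: nA; exists t.
    by move=> /(_ 0 erefl) A0; apply: nA; exists 0.
  split; first by move=> k x y -> ->; rewrite scaler0 addr0.
  by move=> /eqP; rewrite (negbTE h0).
have Aopp : forall x, A x -> forall k, A (k *: x).
  by move=> x Ax k; have := cA k x 0 Ax A0; rewrite addr0.
have ex : forall v, exists c, A (v - c *: h).
  move=> v; apply: boolp.contrapT => nex.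
  pose W' := fun u => exists k, A (u - k *: v).
  have AW : forall u, A u -> W' u by move=> u Au; exists 0; rewrite scale0r subr0.
  have PW : P W'.
    split.
      move=> k x y [c1 H1] [c2 H2]; exists (k * c1 + c2).
      have := cA k _ _ H1 H2.
      by rewrite scalerDl -scalerA scalerBr addrACA opprD.
    move=> [k Hk]; apply: nex.
    have k0 : k != 0.
      by apply/eqP => k0; apply: nAh; move: Hk; rewrite k0 scale0r subr0.
    exists k^-1; have := Aopp _ Hk (- k^-1).
    suff -> : v - k^-1 *: h = - k^-1 *: (h - k *: v) by [].
    by rewrite scalerBr scalerA mulNr mulVf // scaleN1r opprK scaleNr addrC.
  case: (boolp.pselect (forall u, W' u -> A u)) => [WA|nWA].
    apply: nex; exists 0; rewrite scale0r subr0; apply: WA.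
    by exists 1; rewrite scale1r subrr.
  by apply: (maxA W') => //; split.
pose l := fun v => projT1 (boolp.cid (ex v)).
have lP : forall v, A (v - l v *: h) by move=> v; exact: (projT2 (boolp.cid (ex v))).
have uniq : forall v c c', A (v - c *: h) -> A (v - c' *: h) -> c = c'.
  move=> v c c' Hc Hc'; apply/eqP; apply: boolp.contrapT => /negP nc.
  have := cA (-1) _ _ Hc' Hc.
  rewrite scaleN1r opprB addrA subrK -scalerBl => Hd.
  apply: nAh; have := Aopp _ Hd (c' - c)^-1.
  rewrite scalerA mulVf ?scale1r //.
  by rewrite subr_eq0; apply/negP => /eqP E; move: nc; rewrite E eqxx.
exists l; split.
  move=> k x y; symmetry; apply: (uniq (k *: x + y)); last exact: lP.
  have := cA k _ _ (lP x) (lP y).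
  by rewrite scalerBr scalerDl -scalerA addrACA opprD.
by symmetry; apply: (uniq h); [rewrite scale1r subrr|exact: lP].
Qed.

Lemma sep (u v : H) : (forall l, linF l -> l u = l v) -> u = v.
Proof.
move=> Hl; apply/eqP; rewrite -subr_eq0; apply/negP => /negP nz.
have [l [ll lh]] := sep_ex nz.
have l0 : l 0 = 0.
  have := ll 1 0 0; rewrite scaler0 addr0 mul1r => E.
  by apply: (addrI (l 0)); rewrite -E addr0.
have lopp : forall x, l (- x) = - l x.
  move=> x; have := ll (-1) x 0; rewrite addr0 scaleN1r l0 addr0 => ->; by rewrite mulN1r.
have := ll 1 u (- v); rewrite scale1r lopp mul1r lh (Hl l ll) subrr => /eqP.
by rewrite oner_eq0.
Qed.
End Sep.

Section Calc.
Variables (F : fieldType) (H : algType F) (cop : H -> seq (H * H)) (eps : H -> F) (S : H -> H).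
Hypothesis hopf : cocomm_hopf cop eps S.

Definition bil (g : H -> H -> H) :=
  (forall k x x' y, g (k *: x + x') y = k *: g x y + g x' y) /\
  (forall k x y y', g x (k *: y + y') = k *: g x y + g x y').
Definition tril (g : H -> H -> H -> H) :=
  (forall z, bil (fun x y => g x y z)) /\ (forall x, bil (g x)).
Definition quad (g : H -> H -> H -> H -> H) :=
  (forall w, tril (fun x y z => g x y z w)) /\ (forall x, tril (g x)).

Local Notation SW := (@sw _ _ (H : zmodType) cop).
Definition D3 (g : H -> H -> H -> H) a := \sum_(p <- cop a) SW (g p.1) p.2.
Definition R4 (g : H -> H -> H -> H -> H) a := \sum_(p <- cop a) D3 (g p.1) p.2.

Section LinBasics.
Variable f : H -> H.
Hypothesis hf : lin_map f.
Lemma lin0 : f 0 = 0.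
Proof.
have := hf 1 0 0; rewrite scaler0 addr0 scale1r => E.
by apply: (addrI (f 0)); rewrite -E addr0.
Qed.
Lemma linD x y : f (x + y) = f x + f y.
Proof. by have := hf 1 x y; rewrite !scale1r. Qed.
Lemma linZ k x : f (k *: x) = k *: f x.
Proof. by have := hf k x 0; rewrite !addr0 lin0 addr0. Qed.
Lemma linN x : f (- x) = - f x.
Proof. by rewrite -scaleN1r linZ scaleN1r. Qed.
Lemma linB x y : f (x - y) = f x - f y.
Proof. by rewrite linD linN. Qed.
Lemma lin_sum (I : Type) (s : seq I) (G : I -> H) :
  f (\sum_(i <- s) G i) = \sum_(i <- s) f (G i).
Proof. elim: s => [|i s IH]; rewrite ?big_nil ?lin0 // !big_cons linD IH //. Qed.
End LinBasics.

Section LinFBasics.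
Variable l : H -> F.
Hypothesis hl : linF l.
Lemma linF0 : l 0 = 0.
Proof.
have := hl 1 0 0; rewrite scaler0 addr0 mul1r => E.
by apply: (addrI (l 0)); rewrite -E addr0.
Qed.
Lemma linFD x y : l (x + y) = l x + l y.
Proof. by have := hl 1 x y; rewrite scale1r mul1r. Qed.
Lemma linFZ k x : l (k *: x) = k * l x.
Proof. by have := hl k x 0; rewrite !addr0 linF0 addr0. Qed.
Lemma linF_sum (I : Type) (s : seq I) (G : I -> H) :
  l (\sum_(i <- s) G i) = \sum_(i <- s) l (G i).
Proof. elim: s => [|i s IH]; rewrite ?big_nil ?linF0 // !big_cons linFD IH //. Qed.
End LinFBasics.

Lemma sepH (u v : H) : (forall l, linF l -> l u = l v) -> u = v.
Proof. exact: sep. Qed.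

Lemma hS : lin_map S. Proof. by case: hopf => _ [_ [_ [_ [_ [_ [_ [[]]]]]]]]. Qed.
Lemma heps : forall k a b, eps (k *: a + b) = k * eps a + eps b.
Proof. by case: hopf => _ [_ []]. Qed.
Lemma hcu a : SW (fun x y => eps x *: y) a = a /\ SW (fun x y => eps y *: x) a = a.
Proof. by case: hopf => _ [_ [_ []]]. Qed.
Lemma heM a b : eps (a * b) = eps a * eps b.
Proof. by case: hopf => _ [_ [_ [_ [_ [_ [[]]]]]]]. Qed.
Lemma he1 : eps 1 = 1.
Proof. by case: hopf => _ [_ [_ [_ [_ [_ [[]]]]]]]. Qed.
Lemma hant a : SW (fun x y => S x * y) a = eps a *: 1 /\ SW (fun x y => x * S y) a = eps a *: 1.
Proof. by case: hopf => _ [_ [_ [_ [_ [_ [_ [[_ ]]]]]]]]. Qed.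

Lemma bilF (g : H -> H -> H) (l : H -> F) : bil g -> linF l -> bilinear_form (fun x y => l (g x y)).
Proof. by move=> [g1 g2] hl; split=> k x y z /=; rewrite ?g1 ?g2 hl. Qed.

Lemma l_sw (g : H -> H -> H) (l : H -> F) a : linF l -> l (SW g a) = sw cop (fun x y => l (g x y)) a.
Proof. by move=> hl; rewrite /sw (linF_sum hl). Qed.

Lemma sw_lin g : bil g -> lin_map (SW g).
Proof.
move=> hg k a b; apply: sepH => l hl.
rewrite (linFD hl) (linFZ hl) !l_sw //.
by case: hopf => hD _; apply: hD; exact: bilF.
Qed.

Lemma coassocH g a : tril g ->
  \sum_(p <- cop a) \sum_(q <- cop p.1) g q.1 q.2 p.2 = D3 g a.
Proof.
move=> [g1 g2]; apply: sepH => l hl.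
rewrite /D3 !(linF_sum hl).
under eq_bigr do rewrite (linF_sum hl).
under [RHS]eq_bigr do rewrite /sw (linF_sum hl).
case: hopf => _ [hc _]; apply: (hc (fun x y z => l (g x y z))).
split; last split.
- by move=> k x y z w; rewrite (proj1 (g1 _)) hl.
- by move=> k x y z w; rewrite (proj1 (g2 _)) hl.
- by move=> k x y z w; rewrite (proj2 (g2 _)) hl.
Qed.

Lemma cocommH g a : bil g -> SW g a = SW (fun x y => g y x) a.
Proof.
move=> hg; apply: sepH => l hl; rewrite !l_sw //.
case: hopf => _ [_ [_ [_ [_ [_ [_ [_ hc]]]]]]]; apply: hc; exact: bilF.
Qed.

Lemma mulH g a b : bil g ->
  SW g (a * b) = \sum_(p <- cop a) \sum_(q <- cop b) g (p.1 * q.1) (p.2 * q.2).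
Proof.
move=> hg; apply: sepH => l hl; rewrite !l_sw // (linF_sum hl).
under [RHS]eq_bigr do rewrite (linF_sum hl).
case: hopf => _ [_ [_ [_ [hm _]]]]; apply: hm; exact: bilF.
Qed.

Lemma oneH g : bil g -> SW g 1 = g 1 1.
Proof.
move=> hg; apply: sepH => l hl; rewrite !l_sw //.
case: hopf => _ [_ [_ [_ [_ [ho _]]]]]; apply: ho; exact: bilF.
Qed.

Definition hom (f : H -> H) :=
  lin_map f /\ forall g, bil g -> forall a, SW g (f a) = SW (fun x y => g (f x) (f y)) a.

Lemma coalg_hom_hom f : coalg_hom cop eps f -> hom f.
Proof.
case=> hl hd _; split => // g hg a; apply: sepH => l hl'; rewrite !l_sw //.
by apply: hd; exact: bilF.
Qed.

Lemma sw_ext g g' a : (forall x y, g x y = g' x y) -> SW g a = SW g' a.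
Proof. by move=> E; apply: eq_bigr => p _; rewrite E. Qed.
Lemma D3_ext g g' a : (forall x y z, g x y z = g' x y z) -> D3 g a = D3 g' a.
Proof. by move=> E; apply: eq_bigr => p _; apply: sw_ext. Qed.
Lemma R4_ext g g' a : (forall x y z w, g x y z w = g' x y z w) -> R4 g a = R4 g' a.
Proof. by move=> E; apply: eq_bigr => p _; apply: D3_ext. Qed.

Lemma sw_linfun k g g1 g2 a : (forall x y, g x y = k *: g1 x y + g2 x y) ->
  SW g a = k *: SW g1 a + SW g2 a.
Proof. by move=> E; rewrite (sw_ext _ E) /sw big_split /= scaler_sumr. Qed.

Lemma sw_mull c g a : SW (fun x y => c * g x y) a = c * SW g a.
Proof. by rewrite /sw mulr_sumr. Qed.
Lemma sw_mulr c g a : SW (fun x y => g x y * c) a = SW g a * c.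
Proof. by rewrite /sw mulr_suml. Qed.
Lemma sw_scale k g a : SW (fun x y => k *: g x y) a = k *: SW g a.
Proof. by rewrite /sw scaler_sumr. Qed.

Section BilFacts.
Variable g : H -> H -> H.
Hypothesis hg : bil g.
Lemma bilL y : lin_map (fun x => g x y). Proof. exact: (fun k x x' => hg.1 k x x' y). Qed.
Lemma bilR x : lin_map (g x). Proof. exact: (fun k y y' => hg.2 k x y y'). Qed.
Lemma bil_sumL (I : Type) (s : seq I) (G : I -> H) y :
  g (\sum_(i <- s) G i) y = \sum_(i <- s) g (G i) y.
Proof. exact: (lin_sum (bilL y)). Qed.
Lemma bil_sumR (I : Type) (s : seq I) (G : I -> H) x :
  g x (\sum_(i <- s) G i) = \sum_(i <- s) g x (G i).
Proof. exact: (lin_sum (bilR x)). Qed.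
Lemma bil_scaleL k x y : g (k *: x) y = k *: g x y.
Proof. exact: (linZ (bilL y)). Qed.
Lemma bil_scaleR k x y : g x (k *: y) = k *: g x y.
Proof. exact: (linZ (bilR x)). Qed.
End BilFacts.

Lemma tril1 g : tril g -> forall y z, lin_map (fun x => g x y z).
Proof. by move=> [h1 h2] y z; apply: (bilL (h1 z)). Qed.
Lemma tril2 g : tril g -> forall x z, lin_map (fun y => g x y z).
Proof. by move=> [h1 h2] x z; apply: (bilR (h1 z)). Qed.
Lemma tril3 g : tril g -> forall x y, lin_map (g x y).
Proof. by move=> [h1 h2] x y; apply: (bilR (h2 x)). Qed.
Lemma mk_tril g : (forall y z, lin_map (fun x => g x y z)) ->
  (forall x z, lin_map (fun y => g x y z)) -> (forall x y, lin_map (g x y)) -> tril g.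
Proof. by move=> h1 h2 h3; split=> a; split=> k *; rewrite ?h1 ?h2 ?h3. Qed.
Lemma quad_tril1 g : quad g -> forall w, tril (fun x y z => g x y z w).
Proof. by case. Qed.
Lemma quad_tril2 g : quad g -> forall x, tril (g x).
Proof. by case. Qed.
Lemma quad4 g : quad g -> forall x y z, lin_map (g x y z).
Proof. by move=> [_ h] x; apply: tril3. Qed.
Lemma quad1 g : quad g -> forall y z w, lin_map (fun x => g x y z w).
Proof. by move=> [h _] y z w; apply: (tril1 (h w)). Qed.
Lemma mk_quad g : (forall y z w, lin_map (fun x => g x y z w)) ->
  (forall x z w, lin_map (fun y => g x y z w)) ->
  (forall x y w, lin_map (fun z => g x y z w)) ->
  (forall x y z, lin_map (g x y z)) -> quad g.
Proof.
move=> h1 h2 h3 h4; split=> a; apply: mk_tril => *; rewrite /lin_map => *;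
  by rewrite ?h1 ?h2 ?h3 ?h4.
Qed.

Lemma sw_lin_fun (G : H -> H -> H -> H) z :
  (forall y w, lin_map (fun x => G x y w)) -> lin_map (fun x => SW (G x) z).
Proof. by move=> hG k x x'; apply: sw_linfun => y w; rewrite hG. Qed.

Lemma bil_swin (G : H -> H -> H -> H) : tril G -> bil (fun x y => SW (G x) y).
Proof.
move=> hG; split.
- by move=> k x x' y; apply: (sw_lin_fun y (tril1 hG)).
- by move=> k x y y'; apply: (sw_lin (proj2 hG x)).
Qed.

Lemma tril_swin (G : H -> H -> H -> H -> H) : quad G -> tril (fun x y z => SW (G x y) z).
Proof.
move=> hG; apply: mk_tril.
- by move=> y z; apply: sw_lin_fun => *; apply: (quad1 hG).
- move=> x z; apply: sw_lin_fun => *; exact: (tril1 (quad_tril2 hG x)).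
- by move=> x y; apply: sw_lin; apply: (proj2 (quad_tril2 hG x)).
Qed.

Lemma cu_l f a : lin_map f -> SW (fun x y => eps x *: f y) a = f a.
Proof.
move=> hf; rewrite -{2}(proj1 (hcu a)) /sw (lin_sum hf).
by apply: eq_bigr => p _; rewrite (linZ hf).
Qed.
Lemma cu_r f a : lin_map f -> SW (fun x y => eps y *: f x) a = f a.
Proof.
move=> hf; rewrite -{2}(proj2 (hcu a)) /sw (lin_sum hf).
by apply: eq_bigr => p _; rewrite (linZ hf).
Qed.

Lemma D3_sw23 g a : tril g -> D3 g a = D3 (fun x y z => g x z y) a.
Proof. by move=> hg; apply: eq_bigr => p _; apply: cocommH; apply: (proj2 hg). Qed.

Lemma tril_sw12 g : tril g -> tril (fun x y z => g y x z).
Proof. by move=> hg; apply: mk_tril => *; [apply: tril2|apply: tril1|apply: tril3]. Qed.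
Lemma tril_sw23 g : tril g -> tril (fun x y z => g x z y).
Proof. by move=> hg; apply: mk_tril => *; [apply: tril1|apply: tril3|apply: tril2]. Qed.

Lemma D3_sw12 g a : tril g -> D3 g a = D3 (fun x y z => g y x z) a.
Proof.
move=> hg; rewrite -coassocH // -coassocH; last exact: tril_sw12.
apply: eq_bigr => p _; apply: (cocommH p.1 (proj1 hg p.2)).
Qed.

Lemma quad_sw12 g : quad g -> quad (fun x y z w => g y x z w).
Proof.
move=> hg; apply: mk_quad => *.
- exact: (tril1 (quad_tril2 hg _)).
- exact: (quad1 hg).
- exact: (tril2 (quad_tril2 hg _)).
- exact: (quad4 hg).
Qed.
Lemma quad_sw23 g : quad g -> quad (fun x y z w => g x z y w).
Proof.
move=> hg; apply: mk_quad => *.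
- exact: (quad1 hg).
- exact: (tril2 (quad_tril2 hg _)).
- exact: (tril1 (quad_tril2 hg _)).
- exact: (quad4 hg).
Qed.
Lemma quad_sw34 g : quad g -> quad (fun x y z w => g x y w z).
Proof.
move=> hg; apply: mk_quad => *.
- exact: (quad1 hg).
- exact: (tril1 (quad_tril2 hg _)).
- exact: (quad4 hg).
- exact: (tril2 (quad_tril2 hg _)).
Qed.

Lemma R4_sw34 g a : quad g -> R4 g a = R4 (fun x y z w => g x y w z) a.
Proof. by move=> hg; apply: eq_bigr => p _; apply: D3_sw23; apply: (quad_tril2 hg). Qed.
Lemma R4_sw23 g a : quad g -> R4 g a = R4 (fun x y z w => g x z y w) a.
Proof. by move=> hg; apply: eq_bigr => p _; apply: D3_sw12; apply: (quad_tril2 hg). Qed.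
Lemma R4_D3 g a : R4 g a = D3 (fun x y z => SW (g x y) z) a.
Proof. by []. Qed.
Lemma R4_sw12 g a : quad g -> R4 g a = R4 (fun x y z w => g y x z w) a.
Proof.
move=> hg; rewrite !R4_D3 D3_sw12 //; exact: tril_swin.
Qed.
Lemma R4_bal g a : quad g -> R4 g a =
  \sum_(p <- cop a) \sum_(r <- cop p.1) \sum_(s <- cop p.2) g r.1 r.2 s.1 s.2.
Proof.
move=> hg; rewrite R4_D3 -coassocH //; exact: tril_swin.
Qed.

Ltac lin_t :=
  intros; try rewrite /lin_map; intros; simpl;
  repeat (first [ progress rewrite ?hS ?mulrDl ?mulrDr -?scalerAl -?scalerAr
                | match goal with Hf : lin_map _ |- _ => progress rewrite ?Hf end
                | match goal with Hg : bil _ |- _ => progress rewrite ?(proj1 Hg) ?(proj2 Hg) end ]);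
  try done.

Lemma bil_xSy : bil (fun x y => x * S y).
Proof. by split; lin_t. Qed.
Lemma bil_Sxy : bil (fun x y => S x * y).
Proof. by split; lin_t. Qed.

Lemma S1 : S 1 = 1.
Proof.
have := oneH bil_xSy; rewrite (proj2 (hant 1)) he1 scale1r mul1r.
by move=> E; rewrite -E.
Qed.

Lemma epsL : linF eps. Proof. exact: heps. Qed.

Lemma epsS a : eps (S a) = eps a.
Proof.
have := congr1 eps (proj1 (hant a)).
rewrite /sw (linF_sum epsL) (linFZ epsL) he1 mulr1 => <-.
rewrite -{1}(proj2 (hcu a)) /sw (lin_sum hS) (linF_sum epsL).
apply: eq_bigr => p _; rewrite heM (linZ hS) (linFZ epsL) mulrC //.
Qed.

Lemma U (k : H -> H -> H) (hk : bil k) y :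
  \sum_(p <- cop y) \sum_(v <- cop p.1) \sum_(w <- cop p.2) k (v.1 * S w.2) (v.2 * S w.1)
  = eps y *: k 1 1.
Proof.
pose G' := fun a b c d => k (a * S b) (c * S d).
have qG' : quad G' by rewrite /G'; apply: mk_quad; lin_t.
have E : R4 G' y = R4 (fun a b c d => k (a * S d) (b * S c)) y.
  by rewrite (R4_sw23 _ qG') (R4_sw34 _ (quad_sw23 qG')).
rewrite -(R4_bal (g := fun a b c d => k (a * S d) (b * S c))); last first.
  by apply: mk_quad; lin_t.
rewrite -E R4_bal //.
transitivity (\sum_(p <- cop y) k (eps p.1 *: 1) (eps p.2 *: 1)).
  apply: eq_bigr => p _.
  rewrite -(proj2 (hant p.1)) -(proj2 (hant p.2)) /sw (bil_sumL hk).
  by apply: eq_bigr => r _; rewrite (bil_sumR hk).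
rewrite -(cu_l (f := fun w => eps w *: k 1 1)); last first.
  by move=> c x x'; rewrite heps scalerDl scalerA.
by apply: eq_bigr => p _; rewrite (bil_scaleL hk) (bil_scaleR hk) scalerA mulrC -scalerA.
Qed.

Lemma homS : hom S.
Proof.
split; first exact: hS.
move=> g hg a.
rewrite -{1}(cu_r (f := fun x => SW g (S x)) a); last first.
  by move=> c x x'; rewrite hS (sw_lin hg).
pose Psi := fun x y w1 w2 => SW (fun t1 t2 => g (t1 * S w2) (t2 * S w1)) (S x * y).
have bPsi : forall w1 w2, bil (fun t1 t2 => g (t1 * S w2) (t2 * S w1)).
  by move=> w1 w2; split; lin_t.
have qPsi : quad Psi.
  rewrite /Psi; apply: mk_quad.
  - by move=> y z w c x x'; rewrite hS mulrDl -scalerAl (sw_lin (bPsi _ _)).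
  - by move=> y z w c x x'; rewrite mulrDr -scalerAr (sw_lin (bPsi _ _)).
  - by move=> x y w c z z'; apply: sw_linfun => t1 t2; lin_t.
  - by move=> x y z c w w'; apply: sw_linfun => t1 t2; lin_t.
transitivity (R4 Psi a).
  apply: eq_bigr => q _.
  have bK : bil (fun p r => SW (fun u1 u2 => g (u1 * p) (u2 * r)) (S q.1)).
    split=> c x x' y; apply: sw_linfun => u1 u2; lin_t.
  rewrite (sw_ext (g := g) (g' := fun u1 u2 => g (u1 * 1) (u2 * 1))); last first.
    by move=> *; rewrite !mulr1.
  rewrite -(U bK q.2).
  apply: eq_bigr => p _.
  rewrite exchange_big /=.
  apply: eq_bigr => w _.
  rewrite /Psi (mulH _ _ (bPsi _ _)) exchange_big /=.
  apply: eq_bigr => v _; apply: eq_bigr => r _.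
  by rewrite !mulrA.
rewrite R4_bal //.
transitivity (SW (fun x y => eps x *: SW (fun u v => g (S v) (S u)) y) a).
  apply: eq_bigr => q _.
  rewrite exchange_big /= -sw_scale.
  apply: eq_bigr => s _.
  rewrite /Psi -(lin_sum (sw_lin (bPsi _ _))).
  rewrite -[X in SW _ X = _]/(SW (fun x y => S x * y) q.1) (proj1 (hant _)).
  by rewrite (linZ (sw_lin (bPsi _ _))) (oneH (bPsi _ _)) !mul1r.
rewrite (cu_l (f := SW (fun u v => g (S v) (S u)))); last first.
  by apply: sw_lin; split; lin_t.
by rewrite cocommH //; split; lin_t.
Qed.

Lemma ant_rX X y : SW (fun u v => X * u * S v) y = eps y *: X.
Proof.
rewrite (sw_ext (g' := fun u v => X * (u * S v))); last by move=> *; rewrite mulrA.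
by rewrite sw_mull (proj2 (hant y)) -scalerAr mulr1.
Qed.

Lemma antiS a b : S (a * b) = S b * S a.
Proof.
have t1 : tril (fun x u v => S (x * b) * u * S v).
  apply: mk_tril; lin_t; by rewrite hS mulrDl -scalerAl.
transitivity (\sum_(p <- cop a) \sum_(r <- cop p.1) S (r.1 * b) * r.2 * S p.2).
  rewrite (coassocH (g := fun x u v => S (x * b) * u * S v)) // -{1}(cu_r (f := fun x => S (x * b)) a); last first.
    by move=> c x x'; rewrite mulrDl -scalerAl hS.
  by apply: eq_bigr => p _; rewrite ant_rX.
symmetry.
rewrite -{1}(cu_l (f := fun y => S b * S y) a); last by lin_t.
apply: eq_bigr => p _.
transitivity (\sum_(q <- cop b) \sum_(r <- cop p.1) \sum_(s <- cop q.1)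
               S (r.1 * s.1) * (r.2 * s.2) * S q.2 * S p.2).
  have E k X Y : k *: (X * Y) = (k *: 1) * X * Y by rewrite -!scalerAl mul1r.
  rewrite -{1}(proj1 (hcu b)) /sw (lin_sum hS) mulr_suml scaler_sumr.
  apply: eq_bigr => q _.
  rewrite (linZ hS) -!scalerAl scalerA -heM E -(proj1 (hant _)).
  rewrite (mulH _ _ bil_Sxy) !mulr_suml; apply: eq_bigr => r _.
  by rewrite !mulr_suml.
rewrite exchange_big /=; apply: eq_bigr => r _.
have t2 : tril (fun x y z => S (r.1 * x) * (r.2 * y) * S z * S p.2).
  apply: mk_tril; lin_t; by rewrite hS mulrDr -scalerAr.
rewrite (coassocH (g := fun x y z => S (r.1 * x) * (r.2 * y) * S z * S p.2)) //.
rewrite -(cu_r (f := fun x => S (r.1 * x) * r.2 * S p.2) b); last first.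
  by move=> c x x'; rewrite mulrDr -scalerAr hS mulrDl mulrDl -!scalerAl.
apply: eq_bigr => q _.
rewrite (sw_ext (g' := fun u v => (S (r.1 * q.1) * r.2) * u * S v * S p.2)); last first.
  by move=> *; rewrite !mulrA.
by rewrite sw_mulr ant_rX -!scalerAl.
Qed.

Lemma S2 a : S (S a) = a.
Proof.
rewrite -{1}(cu_r (f := fun x => S (S x)) a); last by move=> *; rewrite !hS.
transitivity (\sum_(p <- cop a) \sum_(r <- cop p.1) S (S r.1) * S r.2 * p.2).
  have t1 : tril (fun x u v => S (S x) * (S u * v)).
    apply: mk_tril; lin_t; by rewrite !hS -!scalerAl.
  transitivity (D3 (fun x u v => S (S x) * (S u * v)) a).
    apply: eq_bigr => p _.
    by rewrite sw_mull (proj1 (hant _)) -scalerAr mulr1.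
  rewrite -(coassocH (g := fun x u v => S (S x) * (S u * v))) //.
  by apply: eq_bigr => p _; apply: eq_bigr => r _; rewrite mulrA.
rewrite -{2}(proj1 (hcu a)); apply: eq_bigr => p _.
rewrite -[LHS]/(SW (fun u v => S (S u) * S v * p.2) p.1).
rewrite (sw_ext (g' := fun u v => S (v * S u) * p.2)); last first.
  by move=> *; rewrite antiS.
rewrite sw_mulr /sw -(lin_sum hS) -[\sum_(i <- _) _]/(SW (fun u v => v * S u) p.1).
rewrite -cocommH; last exact: bil_xSy.
by rewrite (proj2 (hant _)) (linZ hS) S1 -scalerAl mul1r.
Qed.

Lemma hom_comp f1 f2 : hom f1 -> hom f2 -> hom (fun x => f1 (f2 x)).
Proof.
move=> [l1 h1] [l2 h2]; split; first by move=> k x y; rewrite l2 l1.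
move=> g hg a; rewrite h1 // h2 //.
by split=> k *; rewrite ?l1 ?(proj1 hg) ?(proj2 hg).
Qed.

Lemma D3_hom f g a : hom f -> tril g ->
  D3 g (f a) = D3 (fun x y z => g (f x) (f y) (f z)) a.
Proof.
move=> [lf hf] hg.
rewrite /D3 -[\sum_(p <- cop (f a)) _]/(SW (fun x y => SW (g x) y) (f a)).
rewrite hf; last exact: bil_swin.
apply: eq_bigr => p _; rewrite hf //; exact: (proj2 hg).
Qed.

Lemma mul_hom f1 f2 g x y : hom f1 -> hom f2 -> bil g ->
  SW g (f1 x * f2 y) =
  \sum_(r <- cop x) \sum_(s <- cop y) g (f1 r.1 * f2 s.1) (f1 r.2 * f2 s.2).
Proof.
move=> [l1 h1] [l2 h2] hg; rewrite mulH //.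
have bK : bil (fun u v => SW (fun s1 s2 => g (u * s1) (v * s2)) (f2 y)).
  split=> k *; apply: sw_linfun => *; lin_t.
rewrite -[LHS]/(SW (fun u v => SW (fun s1 s2 => g (u * s1) (v * s2)) (f2 y)) (f1 x)).
rewrite h1 //; apply: eq_bigr => r _; rewrite h2 //.
by split=> k *; lin_t.
Qed.

Lemma homSF phi : bilinear_form phi -> forall a,
  sw cop phi (S a) = sw cop (fun x y => phi (S x) (S y)) a.
Proof.
move=> [p1 p2] a.
have bg : bil (fun x y => phi x y *: (1 : H)).
  by split=> *; rewrite ?p1 ?p2 scalerDl scalerA.
have := proj2 homS _ bg a.
rewrite /sw -!scaler_suml => /eqP.
by rewrite -subr_eq0 -scalerBl scaler_eq0 oner_eq0 orbF subr_eq0 => /eqP.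
Qed.

Section RB.
Variables (B1 B2 : H -> H).
Hypotheses (hB1 : coalg_hom cop eps B1) (hB2 : coalg_hom cop eps B2)
  (B11 : B1 1 = 1) (B21 : B2 1 = 1)
  (RB1 : forall a b : H,
         B1 a * B1 b = B1 (sw cop (fun x y => B1 x * b * S (B2 y)) a))
  (RB2 : forall a b : H,
         B2 a * B2 b = B2 (sw cop (fun x y => B1 x * b * S (B2 y)) a)).

Lemma homB1 : hom B1. Proof. exact: coalg_hom_hom. Qed.
Lemma homB2 : hom B2. Proof. exact: coalg_hom_hom. Qed.
Lemma lB1 : lin_map B1. Proof. by case: hB1. Qed.
Lemma lB2 : lin_map B2. Proof. by case: hB2. Qed.
Lemma eB1 a : eps (B1 a) = eps a. Proof. by case: hB1. Qed.
Lemma eB2 a : eps (B2 a) = eps a. Proof. by case: hB2. Qed.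

Definition sig a := SW (fun x y => B1 x * S (B2 y)) a.

Lemma B2sig a : B2 (sig a) = B2 a.
Proof.
have := RB2 a 1; rewrite B21 mulr1 => ->; congr B2.
by apply: sw_ext => *; rewrite mulr1.
Qed.
Lemma B1sig a : B1 (sig a) = B1 a.
Proof.
have := RB1 a 1; rewrite B11 mulr1 => ->; congr B1.
by apply: sw_ext => *; rewrite mulr1.
Qed.

Lemma bil_sig : bil (fun x y => B1 x * S (B2 y)).
Proof. have l1 := lB1; have l2 := lB2; by split; lin_t. Qed.

Lemma homsig : hom sig.
Proof.
split; first exact: (sw_lin bil_sig).
move=> g hg a.
have l1 := lB1; have l2 := lB2.
pose G := fun r1 r2 s1 s2 => g (B1 r1 * S (B2 s1)) (B1 r2 * S (B2 s2)).
have qG : quad G by rewrite /G; apply: mk_quad; lin_t.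
transitivity (R4 G a).
  have -> : sig a = \sum_(p <- cop a) B1 p.1 * S (B2 p.2) by [].
  rewrite (lin_sum (sw_lin hg)) R4_bal //.
  apply: eq_bigr => p _.
  by rewrite (mul_hom _ _ homB1 (hom_comp homS homB2) hg).
rewrite (R4_sw23 _ qG) R4_bal; last exact: quad_sw23.
apply: eq_bigr => p _.
rewrite /sig /sw (bil_sumL hg); apply: eq_bigr => r _.
by rewrite (bil_sumR hg).
Qed.

Lemma R4_contr B (hB : hom B) (heB : forall a, eps (B a) = eps a) (c d : H -> H) :
  lin_map c -> lin_map d -> forall a,
  R4 (fun p q r s => c p * S (B q) * B r * d s) a = SW (fun p s => c p * d s) a.
Proof.
move=> lc ld a; have lB := proj1 hB.
apply: eq_bigr => p _.
rewrite -(coassocH (g := fun x y z => c p.1 * S (B x) * B y * d z)); last first.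
  by apply: mk_tril; lin_t.
rewrite -[RHS](cu_l (f := fun w => c p.1 * d w)); last by lin_t.
apply: eq_bigr => q _.
rewrite -[LHS]/(SW (fun u v => c p.1 * S (B u) * B v * d q.2) q.1).
rewrite (sw_ext (g' := fun u v => c p.1 * (S (B u) * B v) * d q.2)); last first.
  by move=> *; rewrite !mulrA.
rewrite sw_mulr sw_mull -[SW (fun u v => S (B u) * B v) _]/(SW (fun u v => (fun x y => S x * y) (B u) (B v)) q.1).
rewrite -(proj2 hB _ bil_Sxy) (proj1 (hant _)) heB.
by rewrite -scalerAr mulr1 -scalerAl.
Qed.
Lemma S_D3 f g y : lin_map f -> f (D3 g y) = D3 (fun u v w => f (g u v w)) y.
Proof.
move=> lf; rewrite /D3 (lin_sum lf); apply: eq_bigr => p _.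
by rewrite /sw (lin_sum lf).
Qed.

Lemma part1 a b : B2 (sig a) * B2 b =
  B2 (\sum_(p <- cop (sig a)) \sum_(q <- cop p.2) p.1 * B2 q.1 * b * S (B2 q.2)).
Proof.
rewrite B2sig RB2; congr B2.
rewrite -[RHS]/(D3 (fun u v w => u * B2 v * b * S (B2 w)) (sig a)).
have l1 := lB1; have l2 := lB2.
rewrite (D3_hom _ homsig); last by apply: mk_tril; lin_t.
rewrite (D3_ext (g' := fun u v w => sig u * B2 v * b * S (B2 w))); last first.
  by move=> *; rewrite !B2sig.
rewrite (sw_ext (g' := fun p s => B1 p * (b * S (B2 s)))); last by move=> *; rewrite mulrA.
rewrite -(R4_contr homB2 eB2 (c := B1) (d := fun s => b * S (B2 s))) //; last by lin_t.
rewrite R4_bal; last by apply: mk_quad; lin_t.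
apply: eq_bigr => p _; rewrite exchange_big /=; apply: eq_bigr => q _.
rewrite /sig /sw !mulr_suml; apply: eq_bigr => r _; by rewrite !mulrA.
Qed.

Lemma part2 x a b : sig a = S x -> B1 (S x) * B1 (S b) =
  B1 (S (\sum_(p <- cop x) \sum_(q <- cop p.2) p.1 * B1 (S q.1) * b * S (B1 (S q.2)))).
Proof.
move=> E; rewrite -E B1sig RB1; congr B1.
have -> : x = S (sig a) by rewrite E S2.
rewrite -[\sum_(p <- _) _]/(D3 (fun u v w => u * B1 (S v) * b * S (B1 (S w))) (S (sig a))).
have l1 := lB1; have l2 := lB2; have ls : lin_map sig := proj1 homsig.
rewrite (S_D3 _ _ hS).
rewrite (D3_ext (g' := fun u v w => B1 (S w) * S b * S (B1 (S v)) * S u)); last first.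
  by move=> *; rewrite !antiS S2 !mulrA.
rewrite (D3_hom _ (hom_comp homS homsig)); last by apply: mk_tril; lin_t.
rewrite (D3_ext (g' := fun u v w => B1 w * S b * S (B1 v) * sig u)); last first.
  by move=> *; rewrite !S2 !B1sig.
rewrite D3_sw12; last by apply: mk_tril; lin_t.
rewrite D3_sw23; last by apply: mk_tril; lin_t.
rewrite D3_sw12; last by apply: mk_tril; lin_t.
rewrite -(R4_contr homB1 eB1 (c := fun p => B1 p * S b) (d := fun s => S (B2 s))) //;
  [|by lin_t|by lin_t].
apply: eq_bigr => p _; apply: eq_bigr => q _ /=.
rewrite /sig -sw_mull; apply: sw_ext => *; by rewrite !mulrA.
Qed.

End RB.

End Calc.

Unset Implicit Arguments.
Set Strict Implicit.

Theorem mainTheorem5 (F : fieldType) (hF : [pchar F] =i pred0)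
  (H : algType F) (cop : H -> seq (H * H)) (eps : H -> F) (S : H -> H)
  (B1 B2 : H -> H) :
  RB_system cop eps S B1 B2 ->
  (forall c : H, exists a : H, RB_cocycle cop S B1 B2 a = c) ->
  RB_hopf cop eps S B2 /\ RB_hopf cop eps S (B1 \o S).
Proof.
move=> [hopf [hB1 hB2] [B11 B21] RB1 RB2] surj.
split.
- split => // x b.
  have [a <-] := surj x.
  exact: (part1 hopf hB1 hB2 B21 RB2).
- split => //.
  + split.
    * move=> k x y /=; rewrite (hS hopf); case: hB1 => l _ _; exact: l.
    * move=> phi hphi a /=; case: hB1 => lB dB eB.
      rewrite dB // (homSF hopf) //.
      case: hphi => p1 p2; split=> *; rewrite lB ?p1 ?p2 //.
    * move=> a /=; case: hB1 => _ _ ->; exact: (epsS hopf).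
  + move=> x b /=.
    have [a Ea] := surj (S x).
    exact: (part2 hopf hB1 hB2 B11 RB1 b Ea).
Qed.
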